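(* Let $H=\sum_{k=1}^{m}\mathbb{Z}u_{k}$ with $u_k\in\mathbb{R}^n$, and suppose $u_1,\dots,u_p$ is a basis of $\mathrm{vect}(H)$, where $p\leq m<n$. Let $v_{p+1},\dots,v_n\in\mathbb{R}^n$ be such that $(u_1,\dots,u_p,v_{p+1},\dots,v_n)$ is a basis of $\mathbb{R}^n$. Then for every $1\leq r\leq n-m$, setting $H'=H+\sum_{k=1}^{r}\mathbb{Z}v_{p+k}$, one has $L(M_H)=L(M_{H'})$, where $M_H$ is computed from the ordered generating family $(u_1,\dots,u_m)$ and $M_{H'}$ from the ordered family $(u_1,\dots,u_p,v_{p+1},\dots,v_{p+r},u_{p+1},\dots,u_m)$. In particular $\Re(\widetilde{\mathrm{dim}}(\overline{H}))=\Re(\widetilde{\mathrm{dim}}(\overline{H'}))$.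
   Context: $\mathrm{vect}(A)$ is the real span of $A$; bars denote closure. Complex dimension: for an additive subgroup $G$ of $\mathbb{R}^n$, $\widetilde{\mathrm{dim}}(G):=p+i(s-p)$, $p=\max\{\dim V: V\text{ a vector subspace},\ V\subset G\}$, $s=\dim\mathrm{vect}(G)$. Definition of $L(M_G)$ for an ordered generating family $w_1,\dots,w_m$ of $G$ whose first $q$ members form a basis of $\mathrm{vect}(G)$: for $k=q+1,\dots,m$ write $w_k=\sum_{j=1}^q\alpha_{k,j}w_j$. Choose $I_k\subset\{1,\dots,q\}$ such that $\{1\}\cup\{\alpha_{k,i}:i\in I_k\}$ is a longest sublist of $1,\alpha_{k,1},\dots,\alpha_{k,q}$ linearly independent over $\mathbb{Q}$. For $j\notin I_k$ write $\alpha_{k,j}=t_{k,j}+\sum_{i\in I_k}\gamma^{(k)}_{j,i}\alpha_{k,i}$ with rational $t_{k,j},\gamma^{(k)}_{j,i}$. Choose $N\in\mathbb{N}^*$ with $m^{(k)}_{i,j}:=N\gamma^{(k)}_{i,j}\in\mathbb{Z}$, and put $w'_{k,j}=Nw_j+\sum_{i\notin I_k}m^{(k)}_{i,j}w_i$ for $j\in I_k$. $M_G$ is the matrix with columns all $w'_{k,j}$, and $L(M_G)=\mathrm{rank}(M_G)$. *)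

(* Defs.v *)
From HB Require Import structures.
From mathcomp Require Import all_boot all_order all_algebra.
From mathcomp Require Import all_classical all_reals all_analysis.
Set Implicit Arguments. Unset Strict Implicit. Unset Printing Implicit Defensive.
Import Order.TTheory GRing.Theory Num.Theory.
Import numFieldNormedType.Exports.
Local Open Scope ring_scope.
Local Open Scope classical_set_scope.

Section Defs.
Variables (R : realType) (n : nat).

Definition rows k (f : 'I_k -> 'rV[R]_n) : 'M[R]_(k, n) := \matrix_(i < k) f i.

Definition catf a b (f : 'I_a -> 'rV[R]_n) (g : 'I_b -> 'rV[R]_n)
  : 'I_(a + b) -> 'rV[R]_n :=
  fun i => match fintype.split i with inl j => f j | inr j => g j end.

Definition Zspan k (f : 'I_k -> 'rV[R]_n) : set 'rV[R]_n :=
  [set x | exists c : 'I_k -> int, x = \sum_(i < k) (c i)%:~R *: f i].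

Definition vect_dim (G : set 'rV[R]_n) : nat :=
  \max_(d < n.+1 | `[< exists f : 'I_d -> 'rV[R]_n,
                         row_free (rows f) /\ forall i, G (f i) >]) d.

Definition max_subspace_dim (G : set 'rV[R]_n) : nat :=
  \max_(d < n.+1 | `[< exists V : 'M[R]_n,
                         \rank V = d /\ forall x : 'rV[R]_n, (x <= V)%MS -> G x >]) d.

(* complex dimension  dim~(G) = p + i (s - p), encoded as the pair (Re, Im) *)
Definition cdim (G : set 'rV[R]_n) : nat * nat :=
  (max_subspace_dim G, (vect_dim G - max_subspace_dim G)%N).
Definition Re_cdim (G : set 'rV[R]_n) : nat := (cdim G).1.

(* the list 1, a_1, ..., a_q  (index 0 is the entry 1) *)
Definition ext1 q (a : 'I_q -> R) : 'I_q.+1 -> R :=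
  fun i => if unlift ord0 i is Some j then a j else 1.

Definition Qfree s (S : {set 'I_s}) (x : 'I_s -> R) : Prop :=
  forall c : 'I_s -> rat, (forall i, i \notin S -> c i = 0) ->
    \sum_(i < s) ratr (c i) * x i = 0 -> forall i, c i = 0.

Definition longest_Qfree q (a : 'I_q -> R) (I : {set 'I_q}) : Prop :=
  Qfree (ord0 |: [set lift ord0 i | i in I]) (ext1 a) /\
  forall S : {set 'I_q.+1}, Qfree S (ext1 a) -> (#|S| <= #|I|.+1)%N.

(* Valid choice data in the construction of M_G for the ordered generating
   family (b_1,...,b_q, e_1,...,e_s) (so w_j = b_j for j <= q and
   w_{q+k} = e_k). alpha k j = alpha_{q+k,j}, I k = I_{q+k},
   t k j = t^{(q+k)}_{j}, gam k j i = gamma^{(q+k)}_{j,i}. *)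
Definition LM_valid q s (b : 'I_q -> 'rV[R]_n) (e : 'I_s -> 'rV[R]_n)
  (alpha : 'I_s -> 'I_q -> R) (I : 'I_s -> {set 'I_q})
  (t : 'I_s -> 'I_q -> rat) (gam : 'I_s -> 'I_q -> 'I_q -> rat) (N : nat) : Prop :=
      row_free (rows b) /\
      (forall k, e k = \sum_(j < q) alpha k j *: b j) /\
      (forall k, longest_Qfree (alpha k) (I k)) /\
      (forall k j, j \notin I k ->
        alpha k j = ratr (t k j) + \sum_(i < q | i \in I k) ratr (gam k j i) * alpha k i) /\
      (0 < N)%N /\
      (forall k j i, j \notin I k -> i \in I k ->
        exists z : int, N%:Q * gam k j i = z%:~R).

(* w'_{k,j} = N w_j + sum_{i notin I_k} m^{(k)}_{i,j} w_i, with m = N gamma *)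
Definition wprime q s (b : 'I_q -> 'rV[R]_n) (I : 'I_s -> {set 'I_q})
  (gam : 'I_s -> 'I_q -> 'I_q -> rat) (N : nat) (k : 'I_s) (j : 'I_q) : 'rV[R]_n :=
  N%:R *: b j + \sum_(i < q | i \notin I k) ratr (N%:Q * gam k i j) *: b i.

Definition memI q (A : {set 'I_q}) (j : 'I_q) : bool := j \in A.

(* L(M_G) = rank of the matrix whose columns are all the w'_{k,j}, j in I_k
   (computed as the dimension of their span) *)
Definition LM q s (b : 'I_q -> 'rV[R]_n) (I : 'I_s -> {set 'I_q})
  (gam : 'I_s -> 'I_q -> 'I_q -> rat) (N : nat) : nat :=
  \rank ((\sum_(k < s) \sum_(j < q | memI (I k) j) <<wprime b I gam N k j>>)%MS : 'M[R]_n).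

End Defs.

(* Main.v *)
Require Import Defs.
From HB Require Import structures.
From mathcomp Require Import all_boot all_order all_algebra.
From mathcomp Require Import all_classical all_reals all_analysis.
From mathcomp Require Import ring lra zify.
Import Order.TTheory GRing.Theory Num.Theory.
Import numFieldNormedType.Exports.
Local Open Scope ring_scope.
Local Open Scope classical_set_scope.

Lemma split_l m n (i : 'I_m) : fintype.split (lshift n i) = inl i.
Proof. exact: (unsplitK (inl i : 'I_m + 'I_n)). Qed.
Lemma split_r m n (i : 'I_n) : fintype.split (rshift m i) = inr i.
Proof. exact: (unsplitK (inr i : 'I_m + 'I_n)). Qed.

Section P1.
Variable R : realType.
Local Set Implicit Arguments. Local Unset Strict Implicit.

Lemma ext1_0 q (a : 'I_q -> R) : ext1 a ord0 = 1.
Proof. by rewrite /ext1 unlift_none. Qed.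
Lemma ext1_lift q (a : 'I_q -> R) j : ext1 a (lift ord0 j) = a j.
Proof. by rewrite /ext1 liftK. Qed.

Lemma rel_coef q (a : 'I_q -> R) (I : {set 'I_q}) (t : 'I_q -> rat)
  (g : 'I_q -> 'I_q -> rat) :
  Qfree (ord0 |: [set lift ord0 i | i in I]) (ext1 a) ->
  (forall j, j \notin I -> a j = ratr (t j) + \sum_(i < q | i \in I) ratr (g j i) * a i) ->
  forall c0 (c : 'I_q -> rat), ratr c0 + \sum_i ratr (c i) * a i = 0 ->
  forall l, l \in I -> c l + \sum_(j < q | j \notin I) c j * g j l = 0.
Proof.
move=> Qf Rel c0 c Hc l lI.
pose d : 'I_q.+1 -> rat := fun i => match unlift ord0 i with
  | Some l => if l \in I then c l + \sum_(j < q | j \notin I) c j * g j l else 0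
  | None => c0 + \sum_(j < q | j \notin I) c j * t j end.
have D0 : d ord0 = c0 + \sum_(j < q | j \notin I) c j * t j by rewrite /d unlift_none.
have Dl : forall i, d (lift ord0 i) = if i \in I then c i + \sum_(j < q | j \notin I) c j * g j i else 0.
  by move=> i; rewrite /d liftK.
have := Qf d _ _ (lift ord0 l); rewrite Dl lI; apply.
  move=> i; case: (unliftP ord0 i) => [j ->|->]; last by rewrite !inE eqxx.
  rewrite Dl; case: ifP => // jI; rewrite !inE (mem_imset _ _ (@lift_inj _ ord0)) jI.
  by rewrite orbT.
rewrite big_ord_recl D0 ext1_0 mulr1.
under [X in _ + X]eq_bigr => i _ do rewrite Dl ext1_lift.
apply: etrans _ Hc.
rewrite [X in _ = _ + X](bigID (mem I)) /=.
under [X in _ = _ + (_ + X)]eq_bigr => j /Rel -> do rewrite mulrDr big_distrr /=.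
rewrite big_split /= (exchange_big_dep (mem I)) //=.
rewrite rmorphD raddf_sum /= [X in _ + X = _](bigID (mem I)) /=.
rewrite [X in _ + (_ + X) = _]big1 ?addr0; last first.
  by move=> i /negbTE ->; rewrite rmorph0 mul0r.
under [X in _ + X = _]eq_bigr => i iI do rewrite iI rmorphD raddf_sum mulrDl big_distrl.
rewrite big_split /=.
under [X in _ = _ + (_ + (_ + X))]eq_bigr => j jI do under eq_bigl => i do rewrite jI andbT.
rewrite -!addrA; congr (_ + _); rewrite addrCA; congr (_ + _).
congr (_ + _); first by apply: eq_bigr => i _; rewrite rmorphM.
apply: eq_bigr => i _; apply: eq_bigr => j _.
by rewrite rmorphM mulrA.
Qed.

Definition relok {q} (a y : 'I_q -> R) : Prop := forall c0 (c : 'I_q -> rat),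
  ratr c0 + \sum_i ratr (c i) * a i = 0 -> \sum_i ratr (c i) * y i = 0.

Lemma col_relok q (a : 'I_q -> R) (I : {set 'I_q}) (t : 'I_q -> rat)
  (g : 'I_q -> 'I_q -> rat) :
  Qfree (ord0 |: [set lift ord0 i | i in I]) (ext1 a) ->
  (forall j, j \notin I -> a j = ratr (t j) + \sum_(i < q | i \in I) ratr (g j i) * a i) ->
  forall l, l \in I ->
  relok a (fun i => if i \in I then (i == l)%:R else ratr (g i l)).
Proof.
move=> Qf Rel l lI c0 c Hc.
have := rel_coef Qf Rel Hc lI; move/(congr1 (@ratr R)).
rewrite rmorphD raddf_sum rmorph0 => E; apply: etrans _ E.
rewrite (bigID (mem I)) /= (bigD1 l) //= lI eqxx mulr1 big1 ?addr0; last first.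
  by move=> i /andP[iI /negbTE il]; rewrite iI il mulr0.
congr (_ + _); apply: eq_bigr => i /negbTE ->; by rewrite rmorphM.
Qed.

Lemma relokZ q (a y : 'I_q -> R) k : relok a y -> relok a (fun i => k * y i).
Proof.
move=> H c0 c Hc; have := congr1 (fun x => k * x) (H c0 c Hc).
rewrite /= mulr0 big_distrr /= => E; apply: etrans _ E.
by apply: eq_bigr => i _; rewrite mulrCA.
Qed.

Lemma relok_rel q (a : 'I_q -> R) (I : {set 'I_q}) (t : 'I_q -> rat)
  (g : 'I_q -> 'I_q -> rat) y :
  (forall j, j \notin I -> a j = ratr (t j) + \sum_(i < q | i \in I) ratr (g j i) * a i) ->
  relok a y -> forall i, i \notin I -> y i = \sum_(l < q | l \in I) ratr (g i l) * y l.
Proof.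
move=> Rel H i iI.
pose c := fun j => (j == i)%:R - (if j \in I then g i j else 0).
have E : forall f : 'I_q -> R, \sum_j ratr (c j) * f j = f i - \sum_(j < q | j \in I) ratr (g i j) * f j.
  move=> f; under eq_bigr => j _ do rewrite rmorphB mulrBl.
  rewrite sumrB (bigD1 i) //= eqxx rmorph1 mul1r big1 ?addr0; last first.
    by move=> j /negbTE ->; rewrite rmorph0 mul0r.
  by congr (_ - _); rewrite (big_mkcond (fun j => j \in I)) /=; apply: eq_bigr => j _; case: ifP; rewrite ?rmorph0 ?mul0r.
apply/eqP; rewrite -subr_eq0 -E; apply/eqP; apply: (H (- t i)).
by rewrite E (Rel i iI) rmorphN addrK addNr.
Qed.


Lemma ratrN (N : nat) (x : rat) : ratr (N%:Q * x) = N%:R * ratr x :> R.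
Proof. by rewrite rmorphM rmorph_int. Qed.

Lemma wprimeE n q s (b : 'I_q -> 'rV[R]_n) (I : 'I_s -> {set 'I_q}) gam N k j :
  j \in I k ->
  wprime b I gam N k j =
  \sum_i (N%:R * (if i \in I k then (i == j)%:R else ratr (gam k i j))) *: b i.
Proof.
move=> jI; rewrite /wprime [RHS](bigID (mem (I k))) /= [X in _ = X + _](bigD1 j) //= jI eqxx mulr1.
rewrite [X in _ = _ + X + _]big1 ?addr0; last by move=> i /andP[-> /negbTE ->]; rewrite mulr0 scale0r.
by congr (_ + _); apply: eq_bigr => i /negbTE ->; rewrite ratrN.
Qed.

Lemma span_w n q s (b : 'I_q -> 'rV[R]_n) (I : 'I_s -> {set 'I_q}) gam N k
  (y : 'I_q -> R) : (0 < N)%N ->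
  (forall i, i \notin I k -> y i = \sum_(l < q | l \in I k) ratr (gam k i l) * y l) ->
  ((\sum_i y i *: b i)%R <= \sum_(j < q | memI (I k) j) <<wprime b I gam N k j>>)%MS.
Proof.
move=> N0 Hy.
have NZ : (N%:R : R) != 0 by rewrite pnatr_eq0 -lt0n.
have -> : \sum_i y i *: b i = \sum_(l < q | l \in I k) (y l / N%:R) *: wprime b I gam N k l.
  rewrite (bigID (mem (I k))) /=.
  under [RHS]eq_bigr => l lI do rewrite /wprime scalerDr scalerA mulfVK // scaler_sumr.
  rewrite big_split /=; congr (_ + _).
  rewrite (exchange_big_dep (fun i => i \notin I k)) //=.
  apply: eq_bigr => i iI; rewrite (Hy i iI) scaler_suml.
  apply: eq_big => [l|l lI]; first by rewrite iI andbT.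
  by rewrite scalerA ratrN; congr (_ *: _); field.
apply: summx_sub => l lI; apply: scalemx_sub; apply: (sumsmx_sup l) => //.
by rewrite genmxE.
Qed.


Definition ext0 (T : nmodType) p r (y : 'I_p -> T) : 'I_(p + r) -> T :=
  fun i => match fintype.split i with inl j => y j | inr _ => 0 end.

Lemma relok_ext p r (a y : 'I_p -> R) (a' : 'I_(p + r) -> R) :
  (forall j, a' (lshift r j) = a j) -> (forall j, a' (rshift p j) = 0) ->
  relok a y -> relok a' (@ext0 R p r y).
Proof.
move=> Hl Hr H c0 c Hc.
rewrite big_split_ord /= [X in _ + X]big1 ?addr0; last by move=> j _; rewrite /ext0 split_r mulr0.
under eq_bigr => j _ do rewrite /ext0 split_l.
apply: (H c0); apply: etrans _ Hc; rewrite big_split_ord /= [X in _ = _ + (_ + X)]big1 ?addr0.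
  by congr (_ + _); apply: eq_bigr => j _; rewrite Hl.
by move=> j _; rewrite Hr mulr0.
Qed.

Lemma relok_res p r (a : 'I_p -> R) (a' y' : 'I_(p + r) -> R) :
  (forall j, a' (lshift r j) = a j) -> (forall j, a' (rshift p j) = 0) ->
  relok a' y' -> (forall j, y' (rshift p j) = 0) /\ relok a (fun j => y' (lshift r j)).
Proof.
move=> Hl Hr H; split.
  move=> j; have := H 0 (fun i => (i == rshift p j)%:R).
  rewrite (bigD1 (rshift p j)) //= big1 ?addr0; last first.
    by move=> i /negbTE ->; rewrite rmorph0 mul0r.
  rewrite (bigD1 (rshift p j)) //= big1 ?addr0; last first.
    by move=> i /negbTE ->; rewrite rmorph0 mul0r.
  rewrite eqxx rmorph1 !mul1r Hr rmorph0 add0r => /(_ erefl) //.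
move=> c0 c Hc.
have E : forall f : 'I_(p+r) -> R,
    \sum_i ratr (@ext0 _ p r c i) * f i = \sum_j ratr (c j) * f (lshift r j).
  move=> f; rewrite big_split_ord /= [X in _ + X]big1 ?addr0; last first.
    by move=> j _; rewrite /ext0 split_r rmorph0 mul0r.
  by apply: eq_bigr => j _; rewrite /ext0 split_l.
rewrite -E; apply: (H c0); rewrite E; apply: etrans _ Hc; congr (_ + _).
by apply: eq_bigr => j _; rewrite Hl.
Qed.

Lemma sum_rows n q (c : 'I_q -> R) (g : 'I_q -> 'rV[R]_n) :
  \sum_i c i *: g i = (\row_i c i) *m rows g.
Proof. by rewrite mulmx_sum_row; apply: eq_bigr => i _; rewrite mxE rowK. Qed.

Lemma valid_incl n q s (b : 'I_q -> 'rV[R]_n) (e : 'I_s -> 'rV[R]_n) alpha (I : 'I_s -> {set 'I_q}) t gam N (k : 'I_s) (y : 'I_q -> R) :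
  LM_valid b e alpha I t gam N -> relok (alpha k) y ->
  ((\sum_i y i *: b i)%R <=
     \sum_(k0 < s) \sum_(j < q | memI (I k0) j) <<wprime b I gam N k0 j>>)%MS.
Proof.
case=> [_ [_ [_ [Hrel [N0 _]]]]] Hy; apply: (sumsmx_sup k) => //.
apply: span_w => // i iI; exact: relok_rel (Hrel k) Hy i iI.
Qed.

Lemma valid_w n q s (b : 'I_q -> 'rV[R]_n) (e : 'I_s -> 'rV[R]_n) alpha (I : 'I_s -> {set 'I_q}) t gam N (k : 'I_s) j :
  LM_valid b e alpha I t gam N -> j \in I k ->
  exists y, relok (alpha k) y /\ wprime b I gam N k j = \sum_i y i *: b i.
Proof.
case=> [_ [_ [Hlong [Hrel _]]]] jI; rewrite (wprimeE _ _ _ jI).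
eexists; split; last reflexivity.
apply: relokZ; exact: col_relok (proj1 (Hlong k)) (Hrel k) j jI.
Qed.


Lemma part1 n p s r (bu : 'I_p -> 'rV[R]_n) (vv : 'I_r -> 'rV[R]_n) (e : 'I_s -> 'rV[R]_n)
  alpha (I : 'I_s -> {set 'I_p}) t gam N alpha' (I' : 'I_s -> {set 'I_(p + r)}) t' gam' N' :
  LM_valid bu e alpha I t gam N -> LM_valid (catf bu vv) e alpha' I' t' gam' N' ->
  LM bu I gam N = LM (catf bu vv) I' gam' N'.
Proof.
move=> V1 V2.
have Hrow : forall k, \row_i alpha' k i = \row_i @ext0 R p r (alpha k) i.
  move=> k; case: V1 => _ [E1 _]; case: V2 => F2 [E2 _].
  have : \sum_i alpha' k i *: catf bu vv i = \sum_i @ext0 R p r (alpha k) i *: catf bu vv i.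
    rewrite -E2 E1 big_split_ord /= [X in _ = _ + X]big1 ?addr0; last first.
      by move=> j _; rewrite /ext0 split_r scale0r.
    by apply: eq_bigr => j _; rewrite /ext0 /catf !split_l.
  by rewrite !sum_rows => /(row_free_inj F2).
have Hl : forall k j, alpha' k (lshift r j) = alpha k j.
  by move=> k j; have := congr1 (fun M : 'M[R]_(1, p + r) => M ord0 (lshift r j)) (Hrow k); rewrite !mxE /ext0 split_l.
have Hr : forall k j, alpha' k (rshift p j) = 0.
  by move=> k j; have := congr1 (fun M : 'M[R]_(1, p + r) => M ord0 (rshift p j)) (Hrow k); rewrite !mxE /ext0 split_r.
rewrite /LM; apply/eqP; rewrite eqn_leq; apply/andP; split; apply: mxrankS.
  apply/sumsmx_subP => k _; apply/sumsmx_subP => j jI; rewrite genmxE.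
  have [y [Hy ->]] := valid_w V1 jI.
  have -> : (\sum_i y i *: bu i)%R = (\sum_i @ext0 R p r y i *: catf bu vv i)%R.
    rewrite big_split_ord /= [X in _ = _ + X]big1 ?addr0; last first.
      by move=> i _; rewrite /ext0 split_r scale0r.
    by apply: eq_bigr => i _; rewrite /ext0 /catf !split_l.
  apply: (valid_incl (k := k) V2); exact: relok_ext.
apply/sumsmx_subP => k _; apply/sumsmx_subP => j jI; rewrite genmxE.
have [y [Hy ->]] := valid_w V2 jI.
have [Hz Hy'] := relok_res (Hl k) (Hr k) Hy.
have -> : (\sum_i y i *: catf bu vv i)%R = (\sum_i y (lshift r i) *: bu i)%R.
  rewrite big_split_ord /= [X in _ + X]big1 ?addr0; last first.
    by move=> i _; rewrite Hz scale0r.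
  by apply: eq_bigr => i _; rewrite /catf !split_l.
exact: (valid_incl (k := k) V1).
Qed.

End P1.

Section Topo.
Variable R : realType.

Lemma cont_sum (T : topologicalType) (V : normedModType R) k (f : 'I_k -> T -> V) :
  (forall i, continuous (f i)) -> continuous (fun x => \sum_(i < k) f i x).
Proof.
elim: k f => [|k IH] f Hf.
  have -> : (fun x => \sum_(i < 0) f i x) = (fun=> 0).
    by apply/funext => x; rewrite big_ord0.
  exact: cst_continuous.
have -> : (fun x => \sum_(i < k.+1) f i x) =
   ((fun x => \sum_(i < k) f (widen_ord (leqnSn k) i) x) + (fun x => f ord_max x))%R.
  by apply/funext => x; rewrite big_ord_recr.
move=> x; apply: continuousD; last exact: Hf.
by apply: IH => i; exact: Hf.
Qed.

Lemma cont_mulmx n m (W : 'M[R]_(n, m)) : continuous (fun x : 'rV[R]_n => x *m W).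
Proof.
have -> : (fun x : 'rV[R]_n => x *m W) = (fun x => \sum_i (x ord0 i *: row i W)).
  by apply/funext => x; rewrite mulmx_sum_row.
apply: cont_sum => i x; apply: continuousZr_tmp; exact: coord_continuous.
Qed.

Lemma closure_map (T U : topologicalType) (f : T -> U) (A : set T) (B : set U) :
  continuous f -> (forall a, A a -> B (f a)) -> forall x, closure A x -> closure B (f x).
Proof.
move=> cf AB x Ax C nC; have := cf x C nC => /Ax [a [Aa Ca]].
by exists (f a); split => //; exact: AB.
Qed.

Lemma not_half (T : topologicalType) (A : set T) (phi : T -> R) y :
  continuous phi -> (forall a, A a -> exists z : int, phi a = z%:~R) ->
  closure A y -> phi y = 2^-1 -> False.
Proof.
move=> cphi HA Ay phy.
have h2 : (0 : R) < 2^-1 by rewrite invr_gt0.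
have := @cvgr_dist_lt _ _ _ _ _ phi (phi y) (cphi y) _ h2 => nb.
have [a [Aa /= Ha]] := Ay _ (nb _).
case: (HA a Aa) => z Ez; rewrite phy Ez in Ha.
move: Ha; rewrite ltr_norml => /andP [h3 h4].
have h5 : (z%:~R : R) < 1 by lra.
have h6 : (0 : R) < z%:~R by lra.
rewrite ltrz1 in h5; rewrite ltr0z in h6; lia.
Qed.

End Topo.

Lemma rows_catf (R : realType) n a b (f : 'I_a -> 'rV[R]_n) (g : 'I_b -> 'rV[R]_n) :
  rows (catf f g) = col_mx (rows f) (rows g).
Proof.
apply/matrixP => i j; rewrite !mxE /catf.
by case: (fintype.split i) => k; rewrite mxE.
Qed.

Section P2.
Variables (R : realType) (n p s r : nat) (u : 'I_(p + s) -> 'rV[R]_n) (v : nat -> 'rV[R]_n).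
Hypothesis Hsub : forall k : 'I_(p + s), (u k <= rows (fun j : 'I_p => u (lshift s j)))%MS.
Hypothesis Hfree : row_free (rows (catf (fun j : 'I_p => u (lshift s j)) (fun j : 'I_(n - p) => v j))).
Hypothesis Hfull : row_full (rows (catf (fun j : 'I_p => u (lshift s j)) (fun j : 'I_(n - p) => v j))).
Hypothesis Hr : (r <= n - p)%N.

Let bu := fun j : 'I_p => u (lshift s j).
Let M := rows (catf bu (fun j : 'I_(n - p) => v j)).
Let Q := pinvmx M.
Let P := fun x : 'rV[R]_n => x *m (lsubmx Q *m rows bu).
Let phi := fun (l : 'I_(n - p)) (x : 'rV[R]_n) => (x *m rsubmx Q) ord0 l.
Let b' := catf bu (fun j : 'I_r => v j).
Let e := fun k : 'I_s => u (rshift p k).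

Lemma coordK (z : 'rV_(p + (n - p))) : (z *m M) *m Q = z.
Proof. by apply: (row_free_inj Hfree); rewrite mulmxKpV // submx_full. Qed.

Lemma xMQ (x : 'rV[R]_n) : x = (x *m Q) *m M.
Proof. by rewrite mulmxKpV // submx_full. Qed.

Lemma PzM z : P (z *m M) = lsubmx z *m rows bu.
Proof. by rewrite /P mulmxA mulmx_lsub coordK. Qed.

Lemma phizM l z : phi l (z *m M) = rsubmx z ord0 l.
Proof. by rewrite /phi mulmx_rsub coordK. Qed.

Lemma gen_bu j : bu j = row_mx (delta_mx 0 j) 0 *m M.
Proof. by rewrite /M rows_catf mul_row_col mul0mx addr0 -rowE rowK. Qed.

Lemma gen_v (j : 'I_r) : v j = row_mx 0 (delta_mx 0 (widen_ord Hr j)) *m M.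
Proof. by rewrite /M rows_catf mul_row_col mul0mx add0r -rowE rowK. Qed.

Lemma gen_e k : e k = row_mx (e k *m pinvmx (rows bu)) 0 *m M.
Proof. by rewrite /M rows_catf mul_row_col mul0mx addr0 mulmxKpV //; apply: Hsub. Qed.

Lemma P_bu j : P (bu j) = bu j.
Proof. by rewrite {1}gen_bu PzM row_mxKl -rowE rowK. Qed.
Lemma P_v (j : 'I_r) : P (v j) = 0.
Proof. by rewrite gen_v PzM row_mxKl mul0mx. Qed.
Lemma P_e k : P (e k) = e k.
Proof. by rewrite {1}gen_e PzM row_mxKl mulmxKpV //; apply: Hsub. Qed.

Lemma phi_gen l i : exists z : int, phi l (catf b' e i) = z%:~R.
Proof.
rewrite /catf; case: (fintype.split i) => [j|k]; last first.
  by exists 0; rewrite gen_e phizM row_mxKr mxE.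
rewrite /b' /catf; case: (fintype.split j) => [j'|j'].
  by exists 0; rewrite gen_bu phizM row_mxKr mxE.
by exists (Posz (l == widen_ord Hr j')); rewrite gen_v phizM row_mxKr mxE /=.
Qed.


Lemma P_lin k (a : 'I_k -> R) (g : 'I_k -> 'rV[R]_n) :
  P (\sum_i a i *: g i) = \sum_i a i *: P (g i).
Proof. by rewrite /P mulmx_suml; apply: eq_bigr => i _; rewrite scalemxAl. Qed.

Lemma phiZ l a x : phi l (a *: x) = a * phi l x.
Proof. by rewrite /phi -scalemxAl mxE. Qed.

Lemma cat_ll j : catf b' e (lshift s (lshift r j)) = bu j.
Proof. by rewrite /catf split_l /b' /catf split_l. Qed.
Lemma cat_lr j : catf b' e (lshift s (rshift p j)) = v j.
Proof. by rewrite /catf split_l /b' /catf split_r. Qed.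
Lemma cat_r k : catf b' e (rshift (p + r) k) = e k.
Proof. by rewrite /catf split_r. Qed.

Lemma phiH' l x : Zspan (catf b' e) x -> exists z : int, phi l x = z%:~R.
Proof.
case=> c ->; rewrite /phi mulmx_suml summxE.
apply: (big_ind (fun x => exists z : int, x = z%:~R)).
- by exists 0.
- by move=> _ _ [z1 ->] [z2 ->]; exists (z1 + z2); rewrite intrD.
move=> i _; have [z Hz] := phi_gen l i; exists (c i * z).
by rewrite -scalemxAl mxE intrM; move: Hz; rewrite /phi => ->.
Qed.

Lemma PH' x : Zspan (catf b' e) x -> Zspan u (P x).
Proof.
case=> c ->; rewrite P_lin.
exists (fun i => match fintype.split i with inl j => c (lshift s (lshift r j))
                   | inr k => c (rshift (p + r) k) end).
rewrite !big_split_ord /= [X in _ + X + _ = _]big1 ?addr0; last first.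
  by move=> j _; rewrite cat_lr P_v scaler0.
congr (_ + _); apply: eq_bigr => j _.
  by rewrite cat_ll P_bu split_l.
by rewrite cat_r P_e split_r.
Qed.

Lemma HH' x : Zspan u x -> Zspan (catf b' e) x.
Proof.
case=> c ->.
exists (fun i => match fintype.split i with
         | inl j => match fintype.split j with inl j' => c (lshift s j') | inr _ => 0 end
         | inr k => c (rshift p k) end).
rewrite !big_split_ord /= [X in _ = _ + X + _]big1 ?addr0; last first.
  by move=> j _; rewrite split_l split_r scale0r.
congr (_ + _); apply: eq_bigr => j _.
  by rewrite cat_ll !split_l.
by rewrite cat_r split_r.
Qed.

Lemma phi_cont l : continuous (phi l).
Proof.
move=> z; have h1 := @cont_mulmx R _ _ (rsubmx Q) z. have h2 := @coord_continuous R 1 (n - p) ord0 l (z *m rsubmx Q). have := continuous_comp h1 h2. exact.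
Qed.

Lemma part2 : max_subspace_dim (closure (Zspan u)) = max_subspace_dim (closure (Zspan (catf b' e))).
Proof.
rewrite /max_subspace_dim; apply: eq_bigl => d.
apply/asboolP/asboolP => -[V [rkV HV]]; exists V; split => // x xV.
  exact: (closureS HH') (HV x xV).
have Hphi : forall l, phi l x = 0.
  move=> l; apply/eqP/negPn/negP => Hd.
  pose y := (2 * phi l x)^-1 *: x.
  have yV : (y <= V)%MS by apply: scalemx_sub.
  apply: (@not_half R _ _ (phi l) y (phi_cont l) (@phiH' l) (HV _ yV)).
  rewrite /y phiZ; field; exact: Hd.
have xP : x = P x.
  rewrite /P mulmxA mulmx_lsub {1}(xMQ x).
  have Hz : rsubmx (x *m Q) = 0.
    apply/rowP => l; rewrite [RHS]mxE; have := Hphi l; rewrite /phi mulmx_rsub => <-.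
    by congr (_ _ _); apply/val_inj.
  by rewrite -[X in X *m _ = _]hsubmxK Hz /M rows_catf mul_row_col mul0mx addr0.
rewrite xP; apply: (@closure_map _ _ P _ _ _ PH' _ (HV x xV)).
exact: cont_mulmx.
Qed.

End P2.

(* u : the family u_1..u_m with m = p + s; v j = v_{p+1+j}. *)
Theorem lemma3p2 (R : realType) (n p s : nat)
  (u : 'I_(p + s) -> 'rV[R]_n) (v : nat -> 'rV[R]_n) :
  (p + s < n)%N ->
  (* u_1..u_p is a basis of vect(H) *)
  row_free (rows (fun j : 'I_p => u (lshift s j))) ->
  (forall k : 'I_(p + s), (u k <= rows (fun j : 'I_p => u (lshift s j)))%MS) ->
  (* (u_1..u_p, v_{p+1}..v_n) is a basis of R^n *)
  row_free (rows (catf (fun j : 'I_p => u (lshift s j)) (fun j : 'I_(n - p) => v j))) ->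
  row_full (rows (catf (fun j : 'I_p => u (lshift s j)) (fun j : 'I_(n - p) => v j))) ->
  forall r : nat, (1 <= r <= n - (p + s))%N ->
  let H := Zspan u in
  let b' := catf (fun j : 'I_p => u (lshift s j)) (fun j : 'I_r => v j) in
  let e := fun k : 'I_s => u (rshift p k) in
  let H' := Zspan (catf b' e) in
  (forall alpha I t gam N alpha' I' t' gam' N',
     LM_valid (fun j : 'I_p => u (lshift s j)) e alpha I t gam N ->
     LM_valid b' e alpha' I' t' gam' N' ->
     LM (fun j : 'I_p => u (lshift s j)) I gam N = LM b' I' gam' N')
  /\ Re_cdim (closure H) = Re_cdim (closure H').
Proof.
move=> Hn Hfr Hsub Hfree Hfull r Hr1 H b' e H'.
split.
  move=> alpha I t gam N alpha' I' t' gam' N' V1 V2; exact: (part1 V1 V2).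
have Hr : (r <= n - p)%N by move: Hr1 => /andP [_ h]; lia.
exact: (@part2 R n p s r u v Hsub Hfree Hfull Hr).
Qed.
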